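(* Let $q$ be a prime power, $h\geq 2$, let $f,g:\mathbb{F}_{q^h}\to\mathbb{F}_q$ be nonzero $\mathbb{F}_q$-linear functionals and $\alpha\in\mathbb{F}_{q^h}\setminus\mathbb{F}_q$. Define the point sets of $\mathrm{PG}(2,q^h)$ $\mathcal{L}=\{(x:f(x):y): x\in\mathbb{F}_{q^h},\ y\in\mathbb{F}_q,\ (x,y)\neq(0,0)\}$ and $\mathcal{L}'=\{(y':x':g(x')+y'\alpha): x'\in\mathbb{F}_{q^h},\ y'\in\mathbb{F}_q,\ (x',y')\neq(0,0)\}$. Suppose that (1) $g(1)=g(\alpha)=1$; (2) $f(1/\alpha)\neq 0$; (3) $f\left(\frac{k-1}{k(k-1)\alpha-k^2}\right)\neq 1$ for all $k\in\mathbb{F}_q\setminus\{0,1\}$. Then $\mathcal{L}$ and $\mathcal{L}'$ are disjoint.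
   Context: Points of $\mathrm{PG}(2,q^h)$ are written in homogeneous coordinates $(a:b:c)$. *)

(* Defs.v *)
From HB Require Import structures.
From mathcomp Require Import all_boot all_order all_algebra all_field.
Set Implicit Arguments. Unset Strict Implicit. Unset Printing Implicit Defensive.
Import GRing.Theory.
Local Open Scope ring_scope.

(* Homogeneous coordinates of PG(2,F): nonzero triples; two triples represent
   the same point iff they are proportional by a nonzero scalar. *)
Definition pg_same (F : fieldType) (u v : F * F * F) : Prop :=
  exists2 c : F, c != 0 & u = (c * v.1.1, c * v.1.2, c * v.2).

(* Ambient: K = F_q (finite field), L = F_{q^h} an extension of degree h over K.
   Elements of F_q inside L are  y%:A. *)

Definition in_setL (K : finFieldType) (L : fieldExtType K)
  (f : {linear L -> K^o}) (u : L * L * L) : Prop :=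
  exists (x : L) (y : K), (x, y) != (0, 0) /\ u = (x, (f x)%:A, y%:A).

Definition in_setL' (K : finFieldType) (L : fieldExtType K)
  (g : {linear L -> K^o}) (alpha : L) (u : L * L * L) : Prop :=
  exists (x' : L) (y' : K), (x', y') != (0, 0) /\
    u = (y'%:A, x', (g x')%:A + y'%:A * alpha).

(* Main.v *)
Require Import Defs.
From HB Require Import structures.
From mathcomp Require Import all_boot all_order all_algebra all_field.
From mathcomp Require Import ring.
Import GRing.Theory.
Local Open Scope ring_scope.

Lemma aux (F : fieldType) (T Y a : F) : T != 0 -> T + Y != 0 -> T + Y * a != 0 ->
  (T/(T+Y) - 1) / (T/(T+Y) * (T/(T+Y)-1) * a - (T/(T+Y))^+2) = (T+Y)*Y/T * (T+Y*a)^-1.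
Proof.
move=> h1 h2 h3.
have e : T/(T+Y) * (T/(T+Y)-1) * a - (T/(T+Y))^+2 = - (T / (T+Y)^+2 * (T + Y * a)).
  by field.
rewrite e; field.
by rewrite h1 h2 h3 oppr_eq0 mulf_neq0.
Qed.

Theorem theorem3p4 (K : finFieldType) (L : fieldExtType K)
  (f g : {linear L -> K^o}) (alpha : L) :
  (2 <= \dim {: L})%N ->
  (exists x : L, f x != 0) ->
  (exists x : L, g x != 0) ->
  alpha \notin (1%VS : {vspace L}) ->
  g 1 = 1 -> g alpha = 1 ->
  f alpha^-1 != 0 ->
  (forall k : K, k != 0 -> k != 1 ->
     f ((k - 1)%:A / ((k * (k - 1))%:A * alpha - (k ^+ 2)%:A)) != 1) ->
  forall u v : L * L * L,
    in_setL f u -> in_setL' g alpha v -> ~ pg_same u v.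
Proof.
move=> _ _ _ anK g1 ga fa Hk u v [x [y [nz ->]]] [x' [y' [nz' ->]]] [c c0 /= [Ex Ef Ey]].
have PHIE a : a%:A = (in_alg L) a by [].
have fZ a w : f (a *: w) = a * f w by rewrite linearZ.
have gZ a w : g (a *: w) = a * g w by rewrite linearZ.
have phi0 a : ((in_alg L) a == 0) = (a == 0) by rewrite fmorph_eq0.
have [y'0|y'n0] := eqVneq y' 0.
  move: Ex Ef; rewrite y'0 scale0r mulr0 => x0; rewrite x0 linear0 scale0r.
  move/esym/eqP; rewrite mulf_eq0 (negPf c0) /= => /eqP x'0.
  by move: nz'; rewrite x'0 y'0 eqxx.
set t := g x' in Ey *; set s := f x in Ef *.
rewrite !PHIE in Ex Ef Ey.
have py' : (in_alg L) y' != 0 by rewrite phi0.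
have yn0 : y != 0.
  apply: contraNneq anK => y0; move: Ey; rewrite y0 rmorph0 => /esym/eqP.
  rewrite mulf_eq0 (negPf c0) /= => /eqP HD.
  have -> : alpha = ((- t) / y') *: 1.
    rewrite PHIE rmorphM rmorphN fmorphV.
    apply: (mulfI py'); rewrite mulrCA mulfV // mulr1; apply/eqP.
    by rewrite -subr_eq0 -HD opprK addrC.
  by apply: memvZ; apply: memv_line.
have py : (in_alg L) y != 0 by rewrite phi0.
set D := (in_alg L) t + (in_alg L) y' * alpha in Ey.
have D0 : D != 0 by apply: contra py; rewrite Ey => /eqP ->; rewrite mulr0.
have cE : c = (in_alg L) y / D by rewrite Ey mulfK.
have x'E : x' = (s / y) *: D.
  rewrite -mulr_algl PHIE rmorphM fmorphV.
  apply: (mulfI c0); rewrite -Ef cE; field; by rewrite py D0.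
have gD : g D = t + y'.
  rewrite /D -!PHIE mulr_algl linearD /= !gZ g1 ga !mulr1 //.
have key : t * y = s * (t + y').
  rewrite {1}/t x'E gZ gD; field; exact: yn0.
have xE : x = (y * y') *: D^-1.
  rewrite Ex cE -mulr_algl PHIE rmorphM; field; exact: D0.
have sE : s = y * y' * f D^-1 by rewrite /s {1}xE fZ.
have [t0|tn0] := eqVneq t 0.
  have : f alpha^-1 == 0; last by rewrite (negPf fa).
  move: key; rewrite t0 mul0r add0r => /esym/eqP; rewrite mulf_eq0 (negPf y'n0) orbF.
  have a0 : alpha != 0 by apply: contraNneq anK => ->; exact: mem0v.
  rewrite sE /D t0 rmorph0 add0r -PHIE mulr_algl invrZ ?unitfE //.
  by rewrite fZ !mulf_eq0 (negPf yn0) (negPf y'n0) /= invr_eq0 (negPf y'n0).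
have ty0 : t + y' != 0.
  by apply: contra tn0 => /eqP e; move: key; rewrite e mulr0 => /eqP; rewrite mulf_eq0 (negPf yn0) orbF.
have k0 : t / (t + y') != 0 by rewrite mulf_neq0 // invr_eq0.
have k1 : t / (t + y') != 1.
  apply: contra y'n0 => /eqP e; apply/eqP.
  have : t = t + y' by rewrite -[LHS](divfK ty0) e mul1r.
  by move/eqP; rewrite eq_sym -subr_eq0 addrAC subrr add0r => /eqP.
move: (Hk _ k0 k1); apply/negP; rewrite negbK; apply/eqP.
have -> : (t / (t + y') - 1)%:A / ((t / (t + y') * (t / (t + y') - 1))%:A * alpha - ((t / (t + y')) ^+ 2)%:A)
   = ((t + y') * y' / t) *: D^-1.
  rewrite -[X in _ = X]mulr_algl !PHIE /D !(rmorphM, rmorphB, rmorphD, rmorphXn, fmorphV, rmorph1).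
  apply: aux.
  - by rewrite phi0.
  - by rewrite -rmorphD phi0.
  - exact: D0.
rewrite fZ.
have fD : f D^-1 = s / (y * y') by rewrite sE; field; rewrite yn0 y'n0.
have s2 : s = t * y / (t + y') by rewrite key mulfK.
by rewrite fD s2; field; rewrite tn0 ty0 yn0 y'n0.
Qed.
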